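(* Let $\mathcal{S}^*$ be the set of optimal solutions to a zero-one knapsack problem instance with $n$ items and integer capacity $W$. There is a deterministic algorithm that calculates $|\mathcal{S}^*|$ exactly with time- and space-complexity $O(n^2W)$.
   Context: A zero-one knapsack instance consists of a capacity $W>0$ (integer) and $n$ items with positive integer weights $w_1,\dots,w_n$ and integer profits $v_1,\dots,v_n$. For $s\subseteq[n]=\{1,\dots,n\}$ let $w(s)=\sum_{i\in s}w_i$ and $v(s)=\sum_{i\in s}v_i$. The set of feasible solutions is $\mathcal{S}=\{s\subseteq[n]: w(s)\le W\}$, $v_{\max}=\max_{s\in\mathcal{S}}v(s)$, and $\mathcal{S}^*=\{s\in\mathcal{S}: v(s)=v_{\max}\}$ is the set of optimal solutions. Complexity is measured accounting for the bit length of the (possibly exponentially large) integers manipulated. *)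

(* Defs.v *)
From mathcomp Require Import all_boot all_order all_algebra.
Set Implicit Arguments. Unset Strict Implicit. Unset Printing Implicit Defensive.
Import Order.TTheory GRing.Theory Num.Theory.
Local Open Scope ring_scope.

Definition ks_weight (n : nat) (w : 'I_n -> nat) (s : {set 'I_n}) : nat :=
  (\sum_(i in s) w i)%N.
Definition ks_value (n : nat) (v : 'I_n -> int) (s : {set 'I_n}) : int :=
  \sum_(i in s) v i.
Definition ks_feasible (n W : nat) (w : 'I_n -> nat) (s : {set 'I_n}) : bool :=
  (ks_weight w s <= W)%N.
Definition ks_optimal (n W : nat) (w : 'I_n -> nat) (v : 'I_n -> int)
  : {set {set 'I_n}} :=
  [set s | ks_feasible W w s &&
           [forall t, ks_feasible W w t ==> (ks_value v t <= ks_value v s)]].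

(* Machine model: a deterministic RAM with unbounded integer cells,    *)
(* direct and indirect addressing.  Cost model: transdichotomous word  *)
(* RAM with multi-word integers: the word size ws is the largest bit   *)
(* length of an input number; an operation costs 1 plus the number of *)
(* words of every integer it reads or writes; space is the total       *)
(* number of words of memory (every cell counts at least one word).    *)
Definition nbits (m : nat) : nat := if m == 0%N then 0%N else (trunc_log 2 m).+1.
Definition zbits (z : int) : nat := nbits `|z|%N.
Definition zwords (ws : nat) (z : int) : nat :=
  maxn 1 ((zbits z + ws.-1) %/ ws).

Inductive instr :=
| IConst of nat & int
| IAdd of nat & nat & nat
| ISub of nat & nat & nat
| ILoad of nat & nat
| IStore of nat & nat
| IJlez of nat & nat
| IJmp of nat
| IHalt.

Definition memory := seq int.
Definition rd (m : memory) (i : nat) : int := nth 0 m i.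
Definition wr (m : memory) (i : nat) (z : int) : memory := set_nth 0 m i z.
Definition mem_space (ws : nat) (m : memory) : nat := sumn (map (zwords ws) m).

Definition step (ws : nat) (P : seq instr) (pc : nat) (m : memory)
  : option (nat * memory * nat) :=
  if (size P <= pc)%N then None else
  match nth IHalt P pc with
  | IConst d z => Some (pc.+1, wr m d z, (1 + zwords ws z)%N)
  | IAdd d a b => let x := rd m a in let y := rd m b in
      Some (pc.+1, wr m d (x + y), (1 + zwords ws x + zwords ws y + zwords ws (x + y))%N)
  | ISub d a b => let x := rd m a in let y := rd m b in
      Some (pc.+1, wr m d (x - y), (1 + zwords ws x + zwords ws y + zwords ws (x - y))%N)
  | ILoad d a => let x := rd m a in let y := rd m `|x|%N in
      Some (pc.+1, wr m d y, (1 + zwords ws x + zwords ws y)%N)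
  | IStore a s => let x := rd m a in let y := rd m s in
      Some (pc.+1, wr m `|x|%N y, (1 + zwords ws x + zwords ws y)%N)
  | IJlez a l => let x := rd m a in
      Some ((if x <= 0 then l else pc.+1), m, (1 + zwords ws x)%N)
  | IJmp l => Some (l, m, 1%N)
  | IHalt => None
  end.

Fixpoint run (ws : nat) (P : seq instr) (fuel pc : nat) (m : memory)
  (t s : nat) : option (memory * nat * nat) :=
  match fuel with
  | 0%N => None
  | k.+1 =>
    match step ws P pc m with
    | None => Some (m, t, s)
    | Some (pc', m', c) => run ws P k pc' m' (t + c) (maxn s (mem_space ws m'))
    end
  end.

Definition ks_input (n W : nat) (w : 'I_n -> nat) (v : 'I_n -> int) : memory :=
  [:: W%:Z; n%:Z] ++ [seq (w i)%:Z | i <- enum 'I_n] ++ [seq v i | i <- enum 'I_n].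

Definition word_size (m : memory) : nat := maxn 1 (foldr maxn 0%N (map zbits m)).

Definition exec (P : seq instr) (fuel : nat) (m : memory) :=
  run (word_size m) P fuel 0 m 0 (mem_space (word_size m) m).

(* Main.v *)
Require Import Defs.
From mathcomp Require Import all_boot all_order all_algebra zify.
Import Order.TTheory GRing.Theory Num.Theory.
Local Open Scope ring_scope.
Set Implicit Arguments. Unset Strict Implicit.

Lemma nbits_lt m : (m < 2 ^ nbits m)%N.
Proof. by rewrite /nbits; case: eqP => [->|h] //; apply: trunc_log_ltn. Qed.

Lemma nbits_le m k : (m < 2 ^ k)%N -> (nbits m <= k)%N.
Proof.
rewrite /nbits; case: eqP => // h hk.
have := trunc_logP (isT : (1 < 2)%N) (_ : (0 < m)%N).
move=> /(_ _) h2; have {h2} h2 : (2 ^ trunc_log 2 m <= m)%N by apply: h2; lia.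
have : (2 ^ trunc_log 2 m < 2 ^ k)%N by apply: leq_ltn_trans hk.
by rewrite ltn_exp2l.
Qed.

Lemma zwords_le ws K z : (0 < ws)%N -> (0 < K)%N -> (`|z|%N < 2 ^ (ws * K))%N ->
  (zwords ws z <= K)%N.
Proof.
move=> hws hK hz; rewrite /zwords geq_max hK /=.
have hb : (zbits z <= ws * K)%N by apply: nbits_le.
apply: (@leq_trans ((ws * K + ws.-1) %/ ws)); first by apply: leq_div2r; lia.
rewrite mulnC divnMDl // divn_small ?addn0 //; lia.
Qed.

Lemma word_size_ge m z : z \in m -> (zbits z <= word_size m)%N.
Proof.
rewrite /word_size => hz; apply: leq_trans (leq_maxr _ _).
elim: m hz => [|y m IH] //=; rewrite inE => /orP [/eqP ->|h].
  exact: leq_maxl.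
by apply: leq_trans (IH h) (leq_maxr _ _).
Qed.

Lemma word_size_pos m : (0 < word_size m)%N.
Proof. by rewrite /word_size leq_max. Qed.

Lemma arithT n W : (0 < n)%N -> (0 < W)%N ->
  ((59 + (9 * (2 * n - 1) + 3 + (14 + (n * (22 * W + 36) + 6 + 0)))) * (1 + 3 * (n + 9))
   <= 5000 * (n ^ 2 * W + 1))%N.
Proof.
move=> hn hW.
have h1 : (n <= n * W)%N by rewrite leq_pmulr.
have k1 : (59 + (9 * (2 * n - 1) + 3 + (14 + (n * (22 * W + 36) + 6 + 0))) <= 149 * (n * W))%N by lia.
have k2 : (1 + 3 * (n + 9) <= 31 * n)%N by lia.
apply: (leq_trans (leq_mul k1 k2)).
have -> : (149 * (n * W) * (31 * n) = 4619 * (n ^ 2 * W))%N.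
  by rewrite expnS expn1; lia.
lia.
Qed.
Lemma arithS n W : (0 < n)%N -> (0 < W)%N ->
  ((W + 20 * n - 2 + 2 * n + 2 + W + 1 + W + 1) * (n + 9) <= 5000 * (n ^ 2 * W + 1))%N.
Proof.
move=> hn hW.
have h1 : (n <= n * W)%N by rewrite leq_pmulr.
have h2 : (W <= n * W)%N by rewrite leq_pmull.
have k1 : (W + 20 * n - 2 + 2 * n + 2 + W + 1 + W + 1 <= 27 * (n * W))%N by lia.
have k2 : (n + 9 <= 10 * n)%N by lia.
apply: (leq_trans (leq_mul k1 k2)).
have -> : (27 * (n * W) * (10 * n) = 270 * (n ^ 2 * W))%N.
  by rewrite expnS expn1; lia.
lia.
Qed.



Lemma rd_wr_eq m i j z : j = i -> rd (wr m i z) j = z.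
Proof. by move=> ->; rewrite /rd /wr nth_set_nth /= eqxx. Qed.
Lemma rd_wr_ne m i j z : j <> i -> rd (wr m i z) j = rd m j.
Proof.
move=> ne; rewrite /rd /wr nth_set_nth /=.
have -> : (j == i) = false by apply/eqP.
done.
Qed.

Section Machine.
Variables (ws L K : nat) (M : int) (P : seq instr).
Hypothesis HM0 : 0 < M.
Hypothesis HK : forall z, `|z| < M -> (zwords ws z <= K)%N.

Definition good (m : memory) := ((size m <= L)%N && all (fun z => `|z| < M) m).

Lemma good_rd m i : good m -> `|rd m i| < M.
Proof.
case/andP=> _ /allP H; rewrite /rd.
case: (ltnP i (size m)) => hi; first by apply: H; apply: mem_nth.
by rewrite nth_default // normr0.
Qed.

Lemma good_wr m d z : good m -> (d < L)%N -> `|z| < M -> good (wr m d z).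
Proof.
case/andP=> hs /allP H hd hz; apply/andP; split.
  by rewrite /wr size_set_nth geq_max hd hs.
apply/(all_nthP 0) => i; rewrite /wr size_set_nth nth_set_nth /= => hi.
case: eqP => // _.
case: (ltnP i (size m)) => hi'; first by apply: H; apply: mem_nth.
by rewrite nth_default // normr0.
Qed.

Lemma space_good m : good m -> (mem_space ws m <= L * K)%N.
Proof.
case/andP=> hs /allP H; rewrite /mem_space.
apply: (@leq_trans (size m * K)); last by rewrite leq_mul2r hs orbT.
elim: m hs H => [|z m IH] hs H //=.
rewrite mulSn leq_add //; first by apply: HK; apply: H; rewrite inE eqxx.
apply: IH; first by apply: ltnW.
by move=> y hy; apply: H; rewrite inE hy orbT.
Qed.

Lemma step_cost pc m pc' m' c : good m -> good m' ->
  step ws P pc m = Some (pc', m', c) -> (c <= 1 + 3 * K)%N.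
Proof.
move=> gm gm'; rewrite /step; case: leqP => // _.
have Hr := fun i => HK (good_rd i gm).
case: (nth IHalt P pc) => [d z|d a b|d a b|d a|a s|a l|l|] //= [_ Em <-];
  rewrite -?Em in gm'.
- have := HK (good_rd d gm'); rewrite rd_wr_eq //; lia.
- have := HK (good_rd d gm'); rewrite rd_wr_eq // => h.
  have := Hr a; have := Hr b; lia.
- have := HK (good_rd d gm'); rewrite rd_wr_eq // => h.
  have := Hr a; have := Hr b; lia.
- have := Hr a; have := Hr `|rd m a|%N; lia.
- have := Hr a; have := Hr s; lia.
- have := Hr a; lia.
- lia.
Qed.

Inductive reach : nat -> memory -> nat -> memory -> nat -> Prop :=
| R0 pc m k : reach pc m pc m k
| RS pc m pc1 m1 c pc' m' k : step ws P pc m = Some (pc1, m1, c) -> good m1 ->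
    reach pc1 m1 pc' m' k -> reach pc m pc' m' k.+1.

Lemma reach_mono pc m pc' m' k k' : reach pc m pc' m' k -> (k <= k')%N ->
  reach pc m pc' m' k'.
Proof.
move=> H; elim: H k' => [pc0 m0 k0|pc0 m0 pc1 m1 c pc2 m2 k0 hs hg _ IH] k' hk.
  exact: R0.
case: k' hk => // k' hk; apply: RS hs hg _; exact: IH.
Qed.

Lemma reach_trans pc m pc1 m1 pc2 m2 k1 k2 : reach pc m pc1 m1 k1 ->
  reach pc1 m1 pc2 m2 k2 -> reach pc m pc2 m2 (k1 + k2).
Proof.
move=> H; elim: H k2 => [pc0 m0 k0|pc0 m0 pc3 m3 c pc4 m4 k0 hs hg _ IH] k2 H2.
  by apply: reach_mono H2 _; apply: leq_addl.
rewrite addSn; apply: RS hs hg _; exact: IH.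
Qed.

Lemma reach_run pc m pc' m' k t s : reach pc m pc' m' k -> good m ->
  step ws P pc' m' = None -> exists fuel t' s',
   run ws P fuel pc m t s = Some (m', t', s') /\ (t' <= t + k * (1 + 3 * K))%N /\
   (s' <= maxn s (L * K))%N.
Proof.
move=> H; elim: H t s => [pc0 m0 k0|pc0 m0 pc1 m1 c pc2 m2 k0 hs hg _ IH] t s gm hn.
  exists 1%N, t, s; rewrite /= hn; split => //; split; first exact: leq_addr.
  exact: leq_maxl.
have [fuel [t' [s' [hr [ht hs']]]]] := IH (t + c)%N (maxn s (mem_space ws m1)) hg hn.
exists fuel.+1, t', s'; rewrite /= hs; split => //; split.
  have := step_cost gm hg hs; rewrite mulSn; lia.
have := space_good hg; lia.
Qed.

Lemma r_const pc d z m pc' m' k : (pc < size P)%N -> nth IHalt P pc = IConst d z ->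
  (d < L)%N -> `|z| < M -> good m ->
  (good (wr m d z) -> reach pc.+1 (wr m d z) pc' m' k) -> reach pc m pc' m' k.+1.
Proof.
move=> hp hn hd hz gm H; have g' := good_wr gm hd hz.
by apply: (RS _ g' (H g')); rewrite /step leqNgt hp hn.
Qed.

Lemma r_add pc d a b x y m pc' m' k : (pc < size P)%N -> nth IHalt P pc = IAdd d a b ->
  rd m a = x -> rd m b = y -> (d < L)%N -> `|x + y| < M -> good m ->
  (good (wr m d (x + y)) -> reach pc.+1 (wr m d (x + y)) pc' m' k) -> reach pc m pc' m' k.+1.
Proof.
move=> hp hn ha hb hd hz gm H; have g' := good_wr gm hd hz.
by apply: (RS _ g' (H g')); rewrite /step leqNgt hp hn /= ha hb.
Qed.

Lemma r_sub pc d a b x y m pc' m' k : (pc < size P)%N -> nth IHalt P pc = ISub d a b ->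
  rd m a = x -> rd m b = y -> (d < L)%N -> `|x - y| < M -> good m ->
  (good (wr m d (x - y)) -> reach pc.+1 (wr m d (x - y)) pc' m' k) -> reach pc m pc' m' k.+1.
Proof.
move=> hp hn ha hb hd hz gm H; have g' := good_wr gm hd hz.
by apply: (RS _ g' (H g')); rewrite /step leqNgt hp hn /= ha hb.
Qed.

Lemma r_load pc d a A x m pc' m' k : (pc < size P)%N -> nth IHalt P pc = ILoad d a ->
  rd m a = A%:Z -> rd m A = x -> (d < L)%N -> good m ->
  (good (wr m d x) -> reach pc.+1 (wr m d x) pc' m' k) -> reach pc m pc' m' k.+1.
Proof.
move=> hp hn ha hx hd gm H; have g' := good_wr gm hd (good_rd A gm); rewrite hx in g'.
by apply: (RS _ g' (H g')); rewrite /step leqNgt hp hn /= ha hx.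
Qed.

Lemma r_store pc a s A x m pc' m' k : (pc < size P)%N -> nth IHalt P pc = IStore a s ->
  rd m a = A%:Z -> rd m s = x -> (A < L)%N -> good m ->
  (good (wr m A x) -> reach pc.+1 (wr m A x) pc' m' k) -> reach pc m pc' m' k.+1.
Proof.
move=> hp hn ha hx hd gm H; have g' := good_wr gm hd (good_rd s gm); rewrite hx in g'.
by apply: (RS _ g' (H g')); rewrite /step leqNgt hp hn /= ha hx.
Qed.

Lemma r_jt pc a l m pc' m' k : (pc < size P)%N -> nth IHalt P pc = IJlez a l ->
  rd m a <= 0 -> good m -> reach l m pc' m' k -> reach pc m pc' m' k.+1.
Proof.
move=> hp hn ha gm H.
by apply: (RS _ gm H); rewrite /step leqNgt hp hn /= ha.
Qed.

Lemma r_jf pc a l m pc' m' k : (pc < size P)%N -> nth IHalt P pc = IJlez a l ->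
  0 < rd m a -> good m -> reach pc.+1 m pc' m' k -> reach pc m pc' m' k.+1.
Proof.
move=> hp hn ha gm H.
by apply: (RS _ gm H); rewrite /step leqNgt hp hn /= leNgt ha.
Qed.

Lemma r_jmp pc l m pc' m' k : (pc < size P)%N -> nth IHalt P pc = IJmp l ->
  good m -> reach l m pc' m' k -> reach pc m pc' m' k.+1.
Proof.
move=> hp hn gm H.
by apply: (RS _ gm H); rewrite /step leqNgt hp hn.
Qed.

Lemma halt_none pc m : (pc < size P)%N -> nth IHalt P pc = IHalt -> step ws P pc m = None.
Proof. by move=> hp hn; rewrite /step leqNgt hp hn. Qed.


Definition ERch pc m (Q : nat -> memory -> Prop) k :=
  exists pcf mf, reach pc m pcf mf k /\ Q pcf mf.

Lemma er_mono pc m Q k k' : ERch pc m Q k -> (k <= k')%N -> ERch pc m Q k'.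
Proof. by case=> pcf [mf [h q]] hk; exists pcf, mf; split => //; apply: reach_mono h hk. Qed.

Lemma er_const pc d z m Q k : (pc < size P)%N -> nth IHalt P pc = IConst d z ->
  (d < L)%N -> `|z| < M -> good m ->
  (good (wr m d z) -> ERch pc.+1 (wr m d z) Q k) -> ERch pc m Q k.+1.
Proof.
move=> hp hn hd hz gm H; have g' := good_wr gm hd hz.
case: (H g') => pcf [mf [h q]]; exists pcf, mf; split => //.
by apply: (RS _ g' h); rewrite /step leqNgt hp hn.
Qed.

Lemma er_add pc d a b x y m Q k : (pc < size P)%N -> nth IHalt P pc = IAdd d a b ->
  rd m a = x -> rd m b = y -> (d < L)%N -> `|x + y| < M -> good m ->
  (good (wr m d (x + y)) -> ERch pc.+1 (wr m d (x + y)) Q k) -> ERch pc m Q k.+1.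
Proof.
move=> hp hn ha hb hd hz gm H; have g' := good_wr gm hd hz.
case: (H g') => pcf [mf [h q]]; exists pcf, mf; split => //.
by apply: (RS _ g' h); rewrite /step leqNgt hp hn /= ha hb.
Qed.

Lemma er_sub pc d a b x y m Q k : (pc < size P)%N -> nth IHalt P pc = ISub d a b ->
  rd m a = x -> rd m b = y -> (d < L)%N -> `|x - y| < M -> good m ->
  (good (wr m d (x - y)) -> ERch pc.+1 (wr m d (x - y)) Q k) -> ERch pc m Q k.+1.
Proof.
move=> hp hn ha hb hd hz gm H; have g' := good_wr gm hd hz.
case: (H g') => pcf [mf [h q]]; exists pcf, mf; split => //.
by apply: (RS _ g' h); rewrite /step leqNgt hp hn /= ha hb.
Qed.

Lemma er_load pc d a A x m Q k : (pc < size P)%N -> nth IHalt P pc = ILoad d a ->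
  rd m a = A%:Z -> rd m A = x -> (d < L)%N -> good m ->
  (good (wr m d x) -> ERch pc.+1 (wr m d x) Q k) -> ERch pc m Q k.+1.
Proof.
move=> hp hn ha hx hd gm H; have g' := good_wr gm hd (good_rd A gm); rewrite hx in g'.
case: (H g') => pcf [mf [h q]]; exists pcf, mf; split => //.
by apply: (RS _ g' h); rewrite /step leqNgt hp hn /= ha hx.
Qed.

Lemma er_store pc a s A x m Q k : (pc < size P)%N -> nth IHalt P pc = IStore a s ->
  rd m a = A%:Z -> rd m s = x -> (A < L)%N -> good m ->
  (good (wr m A x) -> ERch pc.+1 (wr m A x) Q k) -> ERch pc m Q k.+1.
Proof.
move=> hp hn ha hx hd gm H; have g' := good_wr gm hd (good_rd s gm); rewrite hx in g'.
case: (H g') => pcf [mf [h q]]; exists pcf, mf; split => //.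
by apply: (RS _ g' h); rewrite /step leqNgt hp hn /= ha hx.
Qed.

Lemma er_jt pc a l m Q k : (pc < size P)%N -> nth IHalt P pc = IJlez a l ->
  rd m a <= 0 -> good m -> ERch l m Q k -> ERch pc m Q k.+1.
Proof.
move=> hp hn ha gm [pcf [mf [h q]]]; exists pcf, mf; split => //.
by apply: (RS _ gm h); rewrite /step leqNgt hp hn /= ha.
Qed.

Lemma er_jf pc a l m Q k : (pc < size P)%N -> nth IHalt P pc = IJlez a l ->
  0 < rd m a -> good m -> ERch pc.+1 m Q k -> ERch pc m Q k.+1.
Proof.
move=> hp hn ha gm [pcf [mf [h q]]]; exists pcf, mf; split => //.
by apply: (RS _ gm h); rewrite /step leqNgt hp hn /= leNgt ha.
Qed.

Lemma er_jmp pc l m Q k : (pc < size P)%N -> nth IHalt P pc = IJmp l ->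
  good m -> ERch l m Q k -> ERch pc m Q k.+1.
Proof.
move=> hp hn gm [pcf [mf [h q]]]; exists pcf, mf; split => //.
by apply: (RS _ gm h); rewrite /step leqNgt hp hn.
Qed.

Lemma er_stop pc m Q k : Q pc m -> ERch pc m Q k.
Proof. by move=> q; exists pc, m; split => //; apply: R0. Qed.

End Machine.

Lemma size_wr_le m d z B : (size m <= B)%N -> (d < B)%N -> (size (wr m d z) <= B)%N.
Proof. by move=> h1 h2; rewrite /wr size_set_nth geq_max h1 h2. Qed.

Lemma rd_big m j : (size m <= j)%N -> rd m j = 0.
Proof. by move=> h; rewrite /rd nth_default. Qed.



Definition comb (A B : int * nat) : int * nat :=
  if B.1 < A.1 then A else if A.1 < B.1 then B else (A.1, (A.2 + B.2)%N).

Lemma comb_spec A B : let C := comb A B in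
  [/\ A.1 <= C.1, B.1 <= C.1, C.1 = A.1 \/ C.1 = B.1 &
      C.2 = ((A.1 == C.1) * A.2 + (B.1 == C.1) * B.2)%N].
Proof.
case: A B => [a x] [b y]; rewrite /comb /=.
case: ltrgtP => h /=.
- have -> : (b == a) = false by apply/eqP; lia.
  rewrite eqxx; split; try lia; by left.
- have -> : (a == b) = false by apply/eqP; lia.
  rewrite eqxx; split; try lia; by right.
- subst; rewrite eqxx; split; try lia; by left.
Qed.

Section Knap.
Variables (n : nat) (w : 'I_n -> nat) (v : 'I_n -> int).

Definition wn (j : nat) : nat := nth 0%N [seq w i | i <- enum 'I_n] j.
Definition vn (j : nat) : int := nth 0 [seq v i | i <- enum 'I_n] j.

Lemma wnE (j : 'I_n) : wn j = w j.
Proof. by rewrite /wn (nth_map j) ?size_enum_ord // nth_ord_enum. Qed.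
Lemma vnE (j : 'I_n) : vn j = v j.
Proof. by rewrite /vn (nth_map j) ?size_enum_ord // nth_ord_enum. Qed.

Fixpoint dp (i c : nat) : int * nat :=
  if i is i'.+1 then
    if (wn i' <= c)%N then
      comb (dp i' c) ((dp i' (c - wn i')).1 + vn i', (dp i' (c - wn i')).2)
    else dp i' c
  else (0, 1%N).

Definition pre (i : nat) : {set 'I_n} := [set j : 'I_n | (j < i)%N].
Definition Fb (i c : nat) (s : {set 'I_n}) : bool :=
  (s \subset pre i) && (ks_weight w s <= c)%N.
Definition Opt (i c : nat) : {set {set 'I_n}} :=
  [set s | Fb i c s && (ks_value v s == (dp i c).1)].

Lemma preS i (hi : (i < n)%N) : pre i.+1 = Ordinal hi |: pre i.
Proof.
by apply/setP => k; rewrite !inE ltnS leq_eqVlt.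
Qed.

Lemma notin_pre i (hi : (i < n)%N) : Ordinal hi \notin pre i.
Proof. by rewrite inE ltnn. Qed.

Lemma weightD1 (j : 'I_n) (s : {set 'I_n}) : j \in s ->
  ks_weight w s = (w j + ks_weight w (s :\ j))%N.
Proof. by move=> h; rewrite /ks_weight (big_setD1 j h). Qed.
Lemma valueD1 (j : 'I_n) (s : {set 'I_n}) : j \in s ->
  ks_value v s = v j + ks_value v (s :\ j).
Proof. by move=> h; rewrite /ks_value (big_setD1 j h). Qed.

Lemma dp_spec i c : (i <= n)%N ->
  [/\ exists2 s, Fb i c s & ks_value v s = (dp i c).1,
      forall s, Fb i c s -> ks_value v s <= (dp i c).1 &
      #|Opt i c| = (dp i c).2].
Proof.
elim: i c => [|i IH] c hi.
  have F0 : forall s, Fb 0 c s = (s == set0).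
    move=> s; rewrite /Fb.
    have -> : pre 0 = set0 by apply/setP => k; rewrite !inE.
    rewrite subset0; case: eqP => [->|] //=.
    by rewrite /ks_weight big_set0.
  have v0 : ks_value v set0 = 0 by rewrite /ks_value big_set0.
  split.
  - exists set0; [by rewrite F0 | done].
  - by move=> s; rewrite F0 => /eqP ->; rewrite v0.
  - have -> : Opt 0 c = [set set0].
      apply/setP => s; rewrite /Opt !inE F0 /=.
      by case: eqP => [->|]; rewrite ?v0 ?eqxx.
    by rewrite cards1.
have hi' : (i <= n)%N by apply: ltnW.
set j := Ordinal hi.
have wj : wn i = w j := wnE j.
have vj : vn i = v j := vnE j.
have jpre : j \notin pre i := notin_pre hi.
have memF1 : forall s : {set 'I_n}, j \notin s -> forall c', Fb i.+1 c' s = Fb i c' s.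
  move=> s js c'; rewrite /Fb (preS hi) -/j -subDset.
  suff -> : s :\ j = s by [].
  by apply/setP => k; rewrite !inE; case: eqP => // ->; rewrite (negbTE js).
have memF2 : forall s : {set 'I_n}, j \in s -> forall c',
    Fb i.+1 c' s = (w j <= c')%N && Fb i (c' - w j) (s :\ j).
  move=> s js c'; rewrite /Fb (preS hi) -/j -subDset (weightD1 js).
  case: (_ \subset _); rewrite /= ?andbF //.
  by apply/idP/andP => [h|[h1 h2]]; [split|]; lia.
have Fnj : forall (s : {set 'I_n}) c', Fb i c' s -> j \notin s.
  move=> s c'; rewrite /Fb => /andP [/subsetP h _]; apply/negP => /h.
  by rewrite (negbTE jpre).
case: (leqP (w j) c) => hw; last first.
  have dpE : dp i.+1 c = dp i c by rewrite /= wj leqNgt hw.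
  have FE : Fb i.+1 c =1 Fb i c.
    move=> s; case: (boolP (j \in s)) => js; last exact: memF1.
    rewrite memF2 // leqNgt hw /=; apply/esym/negP => /Fnj; by rewrite js.
  have [a1 a2 a3] := IH c hi'.
  have OE : Opt i.+1 c = Opt i c.
    by apply/setP => s; rewrite /Opt !inE FE dpE.
  rewrite OE dpE; split => //.
  - by case: a1 => s sF sv; exists s; rewrite ?FE.
  - by move=> s; rewrite FE; apply: a2.
set A := dp i c.
set B := ((dp i (c - w j)).1 + v j, (dp i (c - w j)).2).
have dpE : dp i.+1 c = comb A B by rewrite /= wj vj hw.
have [cA cB cAB cC] := comb_spec A B.
rewrite dpE; set C := comb A B in cA cB cAB cC *.
have [a1 a2 a3] := IH c hi'.
have [b1 b2 b3] := IH (c - w j)%N hi'.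
have valU : forall t : {set 'I_n}, j \notin t -> ks_value v (j |: t) = v j + ks_value v t.
  move=> t jt; rewrite (valueD1 (setU11 j t)); congr (_ + _).
  by rewrite setU1K.
split.
- case: cAB => ->.
    case: a1 => s sF sv; exists s => //; rewrite memF1 //; exact: Fnj sF.
  case: b1 => t tF tv; exists (j |: t); last by rewrite valU ?tv; [exact: addrC | exact: Fnj tF].
  rewrite memF2 ?setU11 // hw /= setU1K //; exact: Fnj tF.
- move=> s; case: (boolP (j \in s)) => js.
    rewrite memF2 // hw /= => /b2 h; rewrite (valueD1 js).
    apply: le_trans cB; rewrite /B /= addrC lerD2r; exact: h.
  rewrite memF1 // => /a2 h; exact: le_trans cA.
- rewrite -(cardsID [set s : {set 'I_n} | j \in s]) cC addnC; congr (_ + _)%N.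
  + case: eqP => hA; last first.
      rewrite mul0n; apply/eqP; rewrite cards_eq0; apply/eqP/setP => s.
      rewrite !inE dpE -/C; apply/negP => /andP [js /andP [sF /eqP sv]].
      rewrite memF1 // in sF; have := a2 _ sF; rewrite sv => h.
      by apply: hA; apply/eqP; rewrite eq_le cA h.
    rewrite mul1n -a3; apply: eq_card => s; rewrite !inE dpE -/C.
    case: (boolP (j \in s)) => js /=.
      by apply/esym/negP => /andP [/Fnj]; rewrite js.
    by rewrite memF1 // hA.
  + case: eqP => hB; last first.
      rewrite mul0n; apply/eqP; rewrite cards_eq0; apply/eqP/setP => s.
      rewrite !inE dpE -/C; apply/negP => /andP [/andP [sF /eqP sv] js].
      rewrite memF2 // hw /= in sF; have := b2 _ sF => h.
      apply: hB; apply/eqP; rewrite eq_le cB -sv (valueD1 js) /B /= addrC lerD2r h.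
      done.
    rewrite mul1n.
    have -> : Opt i.+1 c :&: [set s : {set 'I_n} | j \in s] = (fun t => j |: t) @: Opt i (c - w j).
      apply/setP => s; rewrite !inE dpE -/C; apply/idP/idP.
        case/andP => /andP [sF /eqP sv] js.
        apply/imsetP; exists (s :\ j); last by rewrite setD1K.
        move: sF; rewrite memF2 // => /andP [_ sF]; rewrite /Opt inE sF /=; apply/eqP.
        move: sv; rewrite (valueD1 js) -hB /B /= => sv; apply: (@addrI _ (v j)).
        by rewrite sv addrC.
      case/imsetP => t; rewrite /Opt inE => /andP [tF /eqP tv] ->.
      have jt := Fnj _ _ tF.
      rewrite setU11 andbT memF2 ?setU11 // hw setU1K //= tF /= valU // tv -hB /B /=.
      by rewrite addrC.
    rewrite /B /= -b3; apply: card_in_imset => t1 t2; rewrite /Opt !inE => /andP [/Fnj h1 _] /andP [/Fnj h2 _] e.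
    by rewrite -(setU1K h1) e setU1K.
Qed.


Lemma dp_bound (VB : nat) i c : (forall j, (j < i)%N -> `|vn j| <= VB%:Z) ->
  `|(dp i c).1| <= (i * VB)%:Z /\ (1 <= (dp i c).2 <= 2 ^ i)%N.
Proof.
elim: i c => [|i IH] c hv /=; first by rewrite normr0 mul0n; lia.
have hv' : forall j, (j < i)%N -> `|vn j| <= VB%:Z by move=> j hj; apply: hv; lia.
have hvi := hv i (ltnSn i).
have [h1 h2] := IH c hv'.
case: ifP => hw; last first.
  split; last by rewrite expnS; lia.
  nia.
have [h3 h4] := IH (c - wn i)%N hv'.
have [cA cB cAB cC] := comb_spec (dp i c) ((dp i (c - wn i)).1 + vn i, (dp i (c - wn i)).2).
set C := comb _ _ in cA cB cAB cC *.
split.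
  case: cAB => -> /=.
    nia.
  nia.
rewrite cC expnS /=; move: cAB; case: eqP => e1; case: eqP => e2 /=; try lia.
Qed.

Lemma opt_card (W : nat) : #|ks_optimal W w v| = (dp n W).2.
Proof.
have [[s0 s0F s0v] a2 a3] := dp_spec W (leqnn n).
have FbE : forall s, Fb n W s = ks_feasible W w s.
  move=> s; rewrite /Fb /ks_feasible.
  suff -> : s \subset pre n by [].
  by apply/subsetP => k _; rewrite inE ltn_ord.
rewrite -a3; apply: eq_card => s; rewrite /ks_optimal /Opt !inE FbE.
case: (boolP (ks_feasible W w s)) => //= fs.
apply/forallP/eqP => [H|e t].
  apply/le_anti; rewrite a2 ?FbE //=; rewrite -s0v; apply: (implyP (H s0)).
  by rewrite -FbE.
by apply/implyP => ft; rewrite e; apply: a2; rewrite FbE.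
Qed.

End Knap.

Definition prog : seq instr := [::
  (* 0 *) IJlez 1 128;
  (* 1 *) IAdd 0 0 1;
  (* 2 *) IAdd 0 0 1;
  (* 3 *) IAdd 0 0 1;
  (* 4 *) IAdd 0 0 1;
  (* 5 *) IAdd 0 0 1;
  (* 6 *) IAdd 0 0 1;
  (* 7 *) IAdd 0 0 1;
  (* 8 *) IAdd 0 0 1;
  (* 9 *) IAdd 0 0 1;
  (* 10 *) IAdd 0 0 1;
  (* 11 *) IAdd 0 0 1;
  (* 12 *) IAdd 0 0 1;
  (* 13 *) IAdd 0 0 1;
  (* 14 *) IAdd 0 0 1;
  (* 15 *) IAdd 0 0 1;
  (* 16 *) IAdd 0 0 1;
  (* 17 *) IAdd 0 0 1;
  (* 18 *) IAdd 0 0 1;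
  (* 19 *) IAdd 0 0 1;
  (* 20 *) IAdd 0 0 1;
  (* 21 *) IStore 0 2;
  (* 22 *) IConst 2 (Posz 1);
  (* 23 *) ISub 2 0 2;
  (* 24 *) IStore 2 1;
  (* 25 *) IConst 2 (Posz 0);
  (* 26 *) IAdd 2 2 0;
  (* 27 *) ISub 2 2 1;
  (* 28 *) ISub 2 2 1;
  (* 29 *) ISub 2 2 1;
  (* 30 *) ISub 2 2 1;
  (* 31 *) ISub 2 2 1;
  (* 32 *) ISub 2 2 1;
  (* 33 *) ISub 2 2 1;
  (* 34 *) ISub 2 2 1;
  (* 35 *) ISub 2 2 1;
  (* 36 *) ISub 2 2 1;
  (* 37 *) ISub 2 2 1;
  (* 38 *) ISub 2 2 1;
  (* 39 *) ISub 2 2 1;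
  (* 40 *) ISub 2 2 1;
  (* 41 *) ISub 2 2 1;
  (* 42 *) ISub 2 2 1;
  (* 43 *) ISub 2 2 1;
  (* 44 *) ISub 2 2 1;
  (* 45 *) ISub 2 2 1;
  (* 46 *) ISub 2 2 1;
  (* 47 *) IConst 1 (Posz 2);
  (* 48 *) ISub 1 0 1;
  (* 49 *) IStore 1 2;
  (* 50 *) IConst 1 (Posz 1);
  (* 51 *) ISub 1 0 1;
  (* 52 *) ILoad 1 1;
  (* 53 *) IAdd 1 1 1;
  (* 54 *) IConst 2 (Posz 1);
  (* 55 *) IAdd 1 1 2;
  (* 56 *) IAdd 0 0 1;
  (* 57 *) IConst 2 (Posz 2);
  (* 58 *) ISub 0 0 2;
  (* 59 *) IConst 2 (Posz 2);
  (* 60 *) ISub 2 1 2;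
  (* 61 *) IJlez 2 68;
  (* 62 *) ILoad 2 1;
  (* 63 *) IStore 0 2;
  (* 64 *) IConst 2 (Posz 1);
  (* 65 *) ISub 1 1 2;
  (* 66 *) ISub 0 0 2;
  (* 67 *) IJmp 59;
  (* 68 *) IConst 2 (Posz 2);
  (* 69 *) ISub 0 0 2;
  (* 70 *) IConst 2 (Posz 1);
  (* 71 *) IAdd 1 0 2;
  (* 72 *) ILoad 4 1;
  (* 73 *) ILoad 9 0;
  (* 74 *) IConst 2 (Posz 2);
  (* 75 *) IAdd 5 0 2;
  (* 76 *) IAdd 6 5 4;
  (* 77 *) IAdd 7 6 4;
  (* 78 *) IAdd 8 7 9;
  (* 79 *) IConst 2 (Posz 1);
  (* 80 *) IAdd 8 8 2;
  (* 81 *) IConst 3 (Posz 0);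
  (* 82 *) ISub 1 4 3;
  (* 83 *) IJlez 1 123;
  (* 84 *) ILoad 10 5;
  (* 85 *) ILoad 11 6;
  (* 86 *) IConst 12 (Posz 0);
  (* 87 *) IAdd 12 12 9;
  (* 88 *) ISub 1 10 12;
  (* 89 *) IJlez 1 91;
  (* 90 *) IJmp 118;
  (* 91 *) IAdd 13 7 12;
  (* 92 *) ISub 14 13 10;
  (* 93 *) ILoad 15 13;
  (* 94 *) ILoad 16 14;
  (* 95 *) IAdd 16 16 11;
  (* 96 *) ISub 1 15 16;
  (* 97 *) IJlez 1 99;
  (* 98 *) IJmp 115;
  (* 99 *) ISub 1 16 15;
  (* 100 *) IJlez 1 107;
  (* 101 *) IStore 13 16;
  (* 102 *) IAdd 13 8 12;
  (* 103 *) ISub 14 13 10;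
  (* 104 *) ILoad 17 14;
  (* 105 *) IStore 13 17;
  (* 106 *) IJmp 115;
  (* 107 *) IAdd 13 8 12;
  (* 108 *) ISub 14 13 10;
  (* 109 *) ILoad 17 14;
  (* 110 *) ILoad 18 13;
  (* 111 *) IAdd 17 17 18;
  (* 112 *) IConst 2 (Posz 1);
  (* 113 *) IAdd 17 17 2;
  (* 114 *) IStore 13 17;
  (* 115 *) IConst 2 (Posz 1);
  (* 116 *) ISub 12 12 2;
  (* 117 *) IJmp 88;
  (* 118 *) IConst 2 (Posz 1);
  (* 119 *) IAdd 3 3 2;
  (* 120 *) IAdd 5 5 2;
  (* 121 *) IAdd 6 6 2;
  (* 122 *) IJmp 82;
  (* 123 *) IAdd 13 8 9;
  (* 124 *) ILoad 0 13;
  (* 125 *) IConst 2 (Posz 1);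
  (* 126 *) IAdd 0 0 2;
  (* 127 *) IHalt;
  (* 128 *) IConst 0 (Posz 1);
  (* 129 *) IHalt].


Ltac clean := repeat match goal with
  | H : is_true (good _ _ _) |- _ => clear H
  | H : forall _, _ |- _ => clear H
  end.
Ltac slia := clean; lia.

Ltac rdw :=
  repeat match goal with
  | |- context [rd (wr ?m ?i ?z) ?j] =>
     first [ rewrite (@rd_wr_ne m i j z); [ | solve [ discriminate | slia ] ]
           | rewrite (@rd_wr_eq m i j z); [ | solve [ reflexivity | slia ] ] ]
  end.
Ltac solrd := rdw; reflexivity.

Ltac exact_g := match goal with H : is_true (good _ _ _) |- _ => exact H end.
Ltac clr_g := match goal with H : is_true (good _ _ _) |- _ => clear H end; move=> ?.
Ltac st HM :=
  match goal with |- ERch _ _ _ _ ?pc _ _ _ =>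
    let i := eval vm_compute in (nth IHalt prog pc) in
    lazymatch i with
    | IConst _ _ => apply: (er_const HM); [reflexivity|reflexivity|slia|slia|exact_g|clr_g]
    | IAdd _ _ _ => eapply (er_add HM); [reflexivity|reflexivity|solrd|solrd|slia|slia|exact_g|clr_g]
    | ISub _ _ _ => eapply (er_sub HM); [reflexivity|reflexivity|solrd|solrd|slia|slia|exact_g|clr_g]
    | IJmp _ => eapply er_jmp; [reflexivity|reflexivity|exact_g|]
    end end.
Ltac stl HM A := eapply (@er_load _ _ _ _ HM _ _ _ A); [reflexivity|reflexivity|rdw; slia|solrd|slia|exact_g|clr_g].
Ltac sts HM A := eapply (@er_store _ _ _ _ HM _ _ _ A); [reflexivity|reflexivity|rdw; slia|solrd|slia|exact_g|clr_g].
Ltac jt HM := eapply er_jt; [reflexivity|reflexivity|rdw; slia|exact_g|].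
Ltac jf HM := eapply er_jf; [reflexivity|reflexivity|rdw; slia|exact_g|].

Section Run.
Variables (n W : nat) (w : 'I_n -> nat) (v : 'I_n -> int).
Hypothesis hW : (0 < W)%N.
Hypothesis hwpos : forall i, (0 < w i)%N.

Local Notation inp := (ks_input W w v).
Local Notation ws := (word_size inp).
Local Notation Bw := (2 ^ ws)%N.
Local Notation K := (n + 9)%N.
Local Notation MM := (2 ^ (ws * K))%N.
Local Notation Dd := (W + 20 * n - 2)%N.
Local Notation Bb := (Dd + 2 * n + 2)%N.
Local Notation Bc := (Bb + W + 1)%N.
Local Notation LL := (Bc + W + 1)%N.
Local Notation Rch := (reach ws LL MM%:Z prog).
Local Notation ER := (ERch ws LL MM%:Z prog).

Lemma HM0 : 0 < MM%:Z.
Proof. by rewrite ltz_nat expn_gt0. Qed.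

Lemma inp_bound z : z \in inp -> (`|z|%N < Bw)%N.
Proof.
move=> h; apply: leq_trans (nbits_lt _) _; rewrite leq_exp2l //.
exact: word_size_ge.
Qed.

Lemma hWB : (W < Bw)%N.
Proof. by have := @inp_bound W%:Z; rewrite inE eqxx => /(_ isT). Qed.
Lemma hnB : (n < Bw)%N.
Proof. by have := @inp_bound n%:Z; rewrite !inE eqxx orbT => /(_ isT). Qed.

Lemma hBM : (64 * Bw < MM)%N.
Proof.
have hws := word_size_pos inp.
apply: (@leq_trans (2 ^ (ws + 7))%N).
  by rewrite expnD; have := expn_gt0 2 ws; lia.
rewrite leq_exp2l //; nia.
Qed.

Lemma size_inp : size inp = (2 * n + 2)%N.
Proof. rewrite /ks_input /= !size_cat !size_map -enumT size_enum_ord; lia. Qed.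

Definition RelInv (s : nat) (m : memory) :=
  [/\ rd m 1 = s%:Z, rd m 0 = (Dd + s)%:Z,
      forall j, ((j <= 2) || (s < j <= 2 * n + 1))%N -> rd m (Dd + j) = rd inp j,
      forall j, (3 <= j <= 2 * n + 1)%N -> rd m j = rd inp j &
      (size m <= Bb)%N].


Lemma rd_inpw j : (j < n)%N -> rd inp (2 + j) = (wn w j)%:Z.
Proof.
move=> hj; rewrite /rd /ks_input /= nth_cat size_map size_enum_ord hj.
have x0 : 'I_n := Ordinal hj.
by rewrite (nth_map x0) ?size_enum_ord // /wn (nth_map x0) ?size_enum_ord.
Qed.

Lemma rd_inpv j : (j < n)%N -> rd inp (2 + n + j) = vn v j.
Proof.
move=> hj; have -> : (2 + n + j = (n + j).+2)%N by lia.
rewrite /rd /ks_input /= nth_cat size_map size_enum_ord.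
by rewrite ltnNge leq_addr /= addKn.
Qed.

Definition regs (i : nat) (m : memory) :=
  rd m 3 = i%:Z /\ rd m 4 = n%:Z /\ rd m 5 = (Dd + 2 + i)%:Z /\
      rd m 6 = (Dd + 2 + n + i)%:Z /\ rd m 7 = Bb%:Z /\ rd m 8 = Bc%:Z /\ rd m 9 = W%:Z.
Definition inputs (m : memory) := forall j, (j < n)%N ->
  rd m (Dd + 2 + j) = (wn w j)%:Z /\ rd m (Dd + 2 + n + j) = vn v j.
Definition arr (m : memory) (f : nat -> int * nat) := forall c, (c <= W)%N ->
  rd m (Bb + c) = (f c).1 /\ rd m (Bc + c) = ((f c).2)%:Z - 1.
Definition InvO (i : nat) (m : memory) := [/\ regs i m, inputs m & arr m (dp w v i)].
Definition InvI (i c : nat) (m : memory) :=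
  regs i m /\ inputs m /\ rd m 10 = (wn w i)%:Z /\ rd m 11 = vn v i /\ rd m 12 = c%:Z /\
      arr m (fun c' => if (c' <= c)%N then dp w v i c' else dp w v i.+1 c').

Lemma inp_mem k : (k < 2 * n + 2)%N -> rd inp k \in inp.
Proof. by move=> hk; rewrite /rd mem_nth // size_inp. Qed.

Lemma wnB j : (j < n)%N -> (wn w j < Bw)%N.
Proof.
move=> hj; have := inp_bound (inp_mem (k := 2 + j) _); rewrite rd_inpw //=.
by apply; lia.
Qed.

Lemma vnB j : (j < n)%N -> `|vn v j| < Bw%:Z.
Proof.
move=> hj; have := inp_bound (inp_mem (k := 2 + n + j) _); rewrite rd_inpv //.
move=> h; have {}h := h ltac:(lia); lia.
Qed.

Lemma dpB i c : (i <= n)%N ->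
  `|(dp w v i c).1| <= (n * Bw)%N%:Z /\ (1 <= (dp w v i c).2 <= 2 ^ n)%N.
Proof.
move=> hi.
have hv : forall j, (j < i)%N -> `|vn v j| <= Bw%:Z.
  move=> j hj; have := vnB (j := j) ltac:(lia); lia.
have [h1 h2] := @dp_bound n w v Bw i c hv.
have : (2 ^ i <= 2 ^ n)%N by rewrite leq_exp2l.
split; [nia | lia].
Qed.

Lemma hGM : (0 < n)%N -> (2 * (n * Bw) + 64 * Bw + 4 * 2 ^ n < MM)%N.
Proof.
move=> hn; have hws := word_size_pos inp.
have T1 : (2 ^ (ws * (n + 7)) <= MM)%N by rewrite leq_exp2l //; nia.
have e1 : (Bw * Bw * 32 <= 2 ^ (ws * (n + 7)))%N.
  rewrite -!expnD (_ : 32 = 2 ^ 5)%N // -expnD leq_exp2l //; nia.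
have e2 : (Bw * 128 <= 2 ^ (ws * (n + 7)))%N.
  rewrite (_ : 128 = 2 ^ 7)%N // -expnD leq_exp2l //; nia.
have e3 : (2 ^ n * 128 <= 2 ^ (ws * (n + 7)))%N.
  rewrite (_ : 128 = 2 ^ 7)%N // -expnD leq_exp2l //; nia.
have e4 : (n * Bw <= Bw * Bw)%N by rewrite leq_mul2r ltnW ?hnB ?orbT.
have := expn_gt0 2 ws; have := expn_gt0 2 n.
lia.
Qed.

End Run.


Section Run.
Variables (n W : nat) (w : 'I_n -> nat) (v : 'I_n -> int).
Hypothesis hW : (0 < W)%N.
Hypothesis hwpos : forall i, (0 < w i)%N.

Local Notation inp := (ks_input W w v).
Local Notation ws := (word_size inp).
Local Notation Bw := (2 ^ ws)%N.
Local Notation K := (n + 9)%N.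
Local Notation MM := (2 ^ (ws * K))%N.
Local Notation Dd := (W + 20 * n - 2)%N.
Local Notation Bb := (Dd + 2 * n + 2)%N.
Local Notation Bc := (Bb + W + 1)%N.
Local Notation LL := (Bc + W + 1)%N.
Local Notation Rch := (reach ws LL MM%:Z prog).
Local Notation ER := (ERch ws LL MM%:Z prog).

Lemma reloc1 Q k : (0 < n)%N ->
  (forall m, good LL MM%:Z m -> RelInv W w v (2 * n + 1) m -> ER 59 m Q k) ->
  good LL MM%:Z inp -> ER 0 inp Q (59 + k).
Proof.
move=> hn Hc Hg.
have HM := @HM0 n W w v.
have h0 : rd inp 0 = W%:Z by [].
have h1 : rd inp 1 = n%:Z by [].
have := @hWB n W w v; have := @hnB n W w v; have := @hBM n W w v hW => hh1 hh2 hh3.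
jf HM.
do 20 st HM.
sts HM (W + 20 * n)%N.
do 2 st HM.
sts HM (W + 20 * n - 1)%N.
do 24 st HM.
sts HM (W + 20 * n - 2)%N.
do 2 st HM.
stl HM (W + 20 * n - 1)%N.
do 6 st HM.
apply: Hc; first exact_g.
split.
- rdw; lia.
- rdw; lia.
- move=> j hj; have [hj2|hj2] := leqP j 2.
    case: j hj hj2 => [|[|[|j]]] // _ _; rdw; lia.
  lia.
- move=> j hj; rdw; reflexivity.
- repeat (apply: size_wr_le; [|lia]).
  rewrite (size_inp w v hW); lia.
Qed.

End Run.


Section Run.
Variables (n W : nat) (w : 'I_n -> nat) (v : 'I_n -> int).
Hypothesis hW : (0 < W)%N.
Hypothesis hwpos : forall i, (0 < w i)%N.

Local Notation inp := (ks_input W w v).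
Local Notation ws := (word_size inp).
Local Notation Bw := (2 ^ ws)%N.
Local Notation K := (n + 9)%N.
Local Notation MM := (2 ^ (ws * K))%N.
Local Notation Dd := (W + 20 * n - 2)%N.
Local Notation Bb := (Dd + 2 * n + 2)%N.
Local Notation Bc := (Bb + W + 1)%N.
Local Notation LL := (Bc + W + 1)%N.
Local Notation Rch := (reach ws LL MM%:Z prog).
Local Notation ER := (ERch ws LL MM%:Z prog).

Lemma reloop Q k : forall d m, (d + 2 <= 2 * n + 1)%N -> (0 < n)%N ->
  good LL MM%:Z m -> @RelInv n W w v (d + 2) m ->
  (forall m', good LL MM%:Z m' -> @RelInv n W w v 2 m' -> ER 68 m' Q k) ->
  ER 59 m Q (9 * d + 3 + k).
Proof.
have HM := @HM0 n W w v.
have := @hWB n W w v; have := @hnB n W w v; have := @hBM n W w v hW => hh1 hh2 hh3.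
elim=> [|d IH] m hd hn Hg [e1 e0 hA hB hS] Hc.
  rewrite (_ : (9 * 0 + 3 + k = k.+3)%N) //.
  st HM; st HM; jt HM.
  apply: Hc; first exact_g.
  split.
  - rdw; slia.
  - rdw; slia.
  - move=> j hj; rdw; apply: hA; lia.
  - move=> j hj; rdw; apply: hB; lia.
  - by repeat (apply: size_wr_le; [|lia]).
have -> : (9 * d.+1 + 3 + k = (9 * d + 3 + k).+4.+4.+1)%N by lia.
st HM; st HM; jf HM.
stl HM (d.+1 + 2)%N.
sts HM (W + 20 * n - 2 + (d.+1 + 2))%N.
do 4 st HM.
apply: IH; [lia|lia|exact_g| |exact Hc].
split.
- rdw; slia.
- rdw; slia.
- move=> j hj; case: (eqVneq j (d.+1 + 2)) => [->|hne].
    rdw; apply: hB; lia.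
  rdw; apply: hA; lia.
- move=> j hj; rdw; apply: hB; lia.
- by repeat (apply: size_wr_le; [|lia]).
Qed.

End Run.


Section Run.
Variables (n W : nat) (w : 'I_n -> nat) (v : 'I_n -> int).
Hypothesis hW : (0 < W)%N.
Hypothesis hwpos : forall i, (0 < w i)%N.

Local Notation inp := (ks_input W w v).
Local Notation ws := (word_size inp).
Local Notation Bw := (2 ^ ws)%N.
Local Notation K := (n + 9)%N.
Local Notation MM := (2 ^ (ws * K))%N.
Local Notation Dd := (W + 20 * n - 2)%N.
Local Notation Bb := (Dd + 2 * n + 2)%N.
Local Notation Bc := (Bb + W + 1)%N.
Local Notation LL := (Bc + W + 1)%N.
Local Notation Rch := (reach ws LL MM%:Z prog).
Local Notation ER := (ERch ws LL MM%:Z prog).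

Lemma reinit m Q k : (0 < n)%N ->
  good LL MM%:Z m -> @RelInv n W w v 2 m ->
  (forall m', good LL MM%:Z m' -> @InvO n W w v 0 m' -> ER 82 m' Q k) ->
  ER 68 m Q (14 + k).
Proof.
have HM := @HM0 n W w v.
have := @hWB n W w v; have := @hnB n W w v; have := @hBM n W w v hW => hh1 hh2 hh3.
move=> hn Hg [e1 e0 hA hB hS] Hc.
have h0 : rd inp 0 = W%:Z by [].
have h1 : rd inp 1 = n%:Z by [].
have a0 := hA 0%N isT; rewrite addn0 in a0.
have a1 := hA 1%N isT.
do 4 st HM.
stl HM (W + 20 * n - 2 + 1)%N.
stl HM (W + 20 * n - 2)%N.
do 8 st HM.
apply: Hc; first exact_g.
split.
- by repeat split; rdw; slia.
- move=> j hj; split; rdw.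
    have := hA (2 + j)%N; rewrite !addnA => ->; [exact: rd_inpw | lia].
  have := hA (2 + n + j)%N; rewrite !addnA => ->; [exact: rd_inpv | lia].
- move=> c hc; split; rdw; rewrite rd_big /=; try lia.
Qed.

End Run.


Section Run.
Variables (n W : nat) (w : 'I_n -> nat) (v : 'I_n -> int).
Hypothesis hW : (0 < W)%N.
Hypothesis hwpos : forall i, (0 < w i)%N.

Local Notation inp := (ks_input W w v).
Local Notation ws := (word_size inp).
Local Notation Bw := (2 ^ ws)%N.
Local Notation K := (n + 9)%N.
Local Notation MM := (2 ^ (ws * K))%N.
Local Notation Dd := (W + 20 * n - 2)%N.
Local Notation Bb := (Dd + 2 * n + 2)%N.
Local Notation Bc := (Bb + W + 1)%N.
Local Notation LL := (Bc + W + 1)%N.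
Local Notation Rch := (reach ws LL MM%:Z prog).
Local Notation ER := (ERch ws LL MM%:Z prog).

Lemma outer_step i m Q k : (0 < n)%N -> (i < n)%N -> good LL MM%:Z m -> @InvO n W w v i m ->
  (forall m', good LL MM%:Z m' -> @InvI n W w v i W m' -> ER 88 m' Q k) ->
  ER 82 m Q (6 + k).
Proof.
have HM := @HM0 n W w v.
have := @hWB n W w v; have := @hnB n W w v; have := @hBM n W w v hW => hh1 hh2 hh3.
move=> hn hi Hg [[r3 [r4 [r5 [r6 [r7 [r8 r9]]]]]] hin har] Hc.
have [iw iv] := hin i hi.
have hg := @hGM n W w v hW hn.
st HM; jf HM.
stl HM (W + 20 * n - 2 + 2 + i)%N.
stl HM (W + 20 * n - 2 + 2 + n + i)%N.
st HM; st HM.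
apply: Hc; first exact_g.
split; first by repeat split; rdw; slia.
split.
  by move=> j hj; split; rdw; [exact: (hin j hj).1 | exact: (hin j hj).2].
split; first by rdw; slia.
split; first by rdw; slia.
split; first by rdw; slia.
move=> c hc; rewrite hc; rdw; exact: (har c hc).
Qed.

Lemma outer_done m Q k : (0 < n)%N -> good LL MM%:Z m -> @InvO n W w v n m ->
  (forall m', good LL MM%:Z m' -> rd m' 0 = ((dp w v n W).2)%:Z -> ER 127 m' Q k) ->
  ER 82 m Q (6 + k).
Proof.
have HM := @HM0 n W w v.
have := @hWB n W w v; have := @hnB n W w v; have := @hBM n W w v hW => hh1 hh2 hh3.
move=> hn Hg [[r3 [r4 [r5 [r6 [r7 [r8 r9]]]]]] hin har] Hc.
have hg := @hGM n W w v hW hn.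
have [d1 d2] := @dpB n W w v hW n W (leqnn n).
have [a1 a2] := har W (leqnn W).
st HM; jt HM.
st HM.
stl HM (W + 20 * n - 2 + 2 * n + 2 + W + 1 + W)%N.
st HM; st HM.
apply: Hc; first exact_g.
rdw; slia.
Qed.

End Run.


Section Run.
Variables (n W : nat) (w : 'I_n -> nat) (v : 'I_n -> int).
Hypothesis hW : (0 < W)%N.
Hypothesis hwpos : forall i, (0 < w i)%N.

Local Notation inp := (ks_input W w v).
Local Notation ws := (word_size inp).
Local Notation Bw := (2 ^ ws)%N.
Local Notation K := (n + 9)%N.
Local Notation MM := (2 ^ (ws * K))%N.
Local Notation Dd := (W + 20 * n - 2)%N.
Local Notation Bb := (Dd + 2 * n + 2)%N.
Local Notation Bc := (Bb + W + 1)%N.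
Local Notation LL := (Bc + W + 1)%N.
Local Notation Rch := (reach ws LL MM%:Z prog).
Local Notation ER := (ERch ws LL MM%:Z prog).

Lemma dpS_lt i c : (c < wn w i)%N -> dp w v i.+1 c = dp w v i c.
Proof. by move=> h; rewrite /= leqNgt h. Qed.

Lemma dpS_ge i c : (wn w i <= c)%N -> dp w v i.+1 c =
  comb (dp w v i c) ((dp w v i (c - wn w i)).1 + vn v i, (dp w v i (c - wn w i)).2).
Proof. by move=> h; rewrite /= h. Qed.

Lemma comb_gt A B : B.1 < A.1 -> comb A B = A.
Proof. by rewrite /comb => ->. Qed.
Lemma comb_lt A B : A.1 < B.1 -> comb A B = B.
Proof. by rewrite /comb => h; rewrite ltNge (ltW h) /= h. Qed.
Lemma comb_eq A B : A.1 = B.1 -> comb A B = (A.1, (A.2 + B.2)%N).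
Proof. by rewrite /comb => ->; rewrite ltxx. Qed.

Lemma inner_exit i c m Q k : (0 < n)%N -> (i < n)%N -> (c <= W)%N -> (c < wn w i)%N ->
  good LL MM%:Z m -> @InvI n W w v i c m ->
  (forall m', good LL MM%:Z m' -> @InvO n W w v i.+1 m' -> ER 82 m' Q k) ->
  ER 88 m Q (8 + k).
Proof.
have HM := @HM0 n W w v.
have := @hWB n W w v; have := @hnB n W w v; have := @hBM n W w v hW => hh1 hh2 hh3.
move=> hn hi hc hcw Hg [[r3 [r4 [r5 [r6 [r7 [r8 r9]]]]]] [hin [r10 [r11 [r12 har]]]]] Hc.
have wB := @wnB n W w v hW i hi.
st HM; jf HM.
do 6 st HM.
apply: Hc; first exact_g.
split; first by repeat split; rdw; slia.
  by move=> j hj; split; rdw; [exact: (hin j hj).1 | exact: (hin j hj).2].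
move=> c' hc'; rdw; have := har c' hc'.
case: (leqP c' c) => h; last by [].
by rewrite dpS_lt //; apply: (leq_ltn_trans h).
Qed.

End Run.


Section Run.
Variables (n W : nat) (w : 'I_n -> nat) (v : 'I_n -> int).
Hypothesis hW : (0 < W)%N.
Hypothesis hwpos : forall i, (0 < w i)%N.

Local Notation inp := (ks_input W w v).
Local Notation ws := (word_size inp).
Local Notation Bw := (2 ^ ws)%N.
Local Notation K := (n + 9)%N.
Local Notation MM := (2 ^ (ws * K))%N.
Local Notation Dd := (W + 20 * n - 2)%N.
Local Notation Bb := (Dd + 2 * n + 2)%N.
Local Notation Bc := (Bb + W + 1)%N.
Local Notation LL := (Bc + W + 1)%N.
Local Notation Rch := (reach ws LL MM%:Z prog).
Local Notation ER := (ERch ws LL MM%:Z prog).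


Lemma inner_gt i c m Q k : (0 < n)%N -> (i < n)%N -> (c <= W)%N -> (wn w i <= c)%N ->
  (dp w v i (c - wn w i)).1 + vn v i < (dp w v i c).1 ->
  good LL MM%:Z m -> @InvI n W w v i c m ->
  (forall m', good LL MM%:Z m' -> @InvI n W w v i (c - 1) m' -> ER 88 m' Q k) ->
  ER 88 m Q (13 + k).
Proof.
have HM := @HM0 n W w v.
have := @hWB n W w v; have := @hnB n W w v; have := @hBM n W w v hW => hh1 hh2 hh3.
move=> hn hi hc hcw hcmp Hg [[r3 [r4 [r5 [r6 [r7 [r8 r9]]]]]] [hin [r10 [r11 [r12 har]]]]] Hc.
have wB := @wnB n W w v hW i hi.
have vB := @vnB n W w v hW i hi.
have wP : (0 < wn w i)%N by have := hwpos (Ordinal hi); rewrite -wnE.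
have hg := @hGM n W w v hW hn.
have [d1 d2] := @dpB n W w v hW i c (ltnW hi).
have [e1 e2] := @dpB n W w v hW i (c - wn w i)%N (ltnW hi).
have [x1 x2] : rd m (Bb + c) = (dp w v i c).1 /\ rd m (Bc + c) = ((dp w v i c).2)%:Z - 1.
  by have := har c hc; rewrite leqnn => h; exact h.
have [y1 y2] : rd m (Bb + (c - wn w i)) = (dp w v i (c - wn w i)).1 /\
    rd m (Bc + (c - wn w i)) = ((dp w v i (c - wn w i)).2)%:Z - 1.
  by have := har (c - wn w i)%N ltac:(lia); rewrite leq_subr => h; exact h.
st HM; jt HM.
st HM; st HM.
stl HM (W + 20 * n - 2 + 2 * n + 2 + c)%N.
stl HM (W + 20 * n - 2 + 2 * n + 2 + (c - wn w i))%N.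
st HM; st HM.
jf HM.
do 4 st HM.
apply: Hc; first exact_g.
split; first by repeat split; rdw; slia.
split; first by move=> j hj; split; rdw; [exact: (hin j hj).1 | exact: (hin j hj).2].
split; first by rdw; slia.
split; first by rdw; slia.
split; first by rdw; slia.
move=> c' hc'; cbv beta; case: (eqVneq c' c) => [->|ne].
  have -> : (c <= c - 1)%N = false by lia.
  rewrite dpS_ge // comb_gt //; rdw; split; slia.
have -> : (c' <= c - 1)%N = (c' <= c)%N by lia.
rdw; exact: har c' hc'.
Qed.

Lemma inner_lt i c m Q k : (0 < n)%N -> (i < n)%N -> (c <= W)%N -> (wn w i <= c)%N ->
  (dp w v i c).1 < (dp w v i (c - wn w i)).1 + vn v i ->
  good LL MM%:Z m -> @InvI n W w v i c m ->
  (forall m', good LL MM%:Z m' -> @InvI n W w v i (c - 1) m' -> ER 88 m' Q k) ->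
  ER 88 m Q (20 + k).
Proof.
have HM := @HM0 n W w v.
have := @hWB n W w v; have := @hnB n W w v; have := @hBM n W w v hW => hh1 hh2 hh3.
move=> hn hi hc hcw hcmp Hg [[r3 [r4 [r5 [r6 [r7 [r8 r9]]]]]] [hin [r10 [r11 [r12 har]]]]] Hc.
have wB := @wnB n W w v hW i hi.
have vB := @vnB n W w v hW i hi.
have wP : (0 < wn w i)%N by have := hwpos (Ordinal hi); rewrite -wnE.
have hg := @hGM n W w v hW hn.
have [d1 d2] := @dpB n W w v hW i c (ltnW hi).
have [e1 e2] := @dpB n W w v hW i (c - wn w i)%N (ltnW hi).
have [x1 x2] : rd m (Bb + c) = (dp w v i c).1 /\ rd m (Bc + c) = ((dp w v i c).2)%:Z - 1.
  by have := har c hc; rewrite leqnn => h; exact h.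
have [y1 y2] : rd m (Bb + (c - wn w i)) = (dp w v i (c - wn w i)).1 /\
    rd m (Bc + (c - wn w i)) = ((dp w v i (c - wn w i)).2)%:Z - 1.
  by have := har (c - wn w i)%N ltac:(lia); rewrite leq_subr => h; exact h.
st HM; jt HM.
st HM; st HM.
stl HM (W + 20 * n - 2 + 2 * n + 2 + c)%N.
stl HM (W + 20 * n - 2 + 2 * n + 2 + (c - wn w i))%N.
st HM; st HM.
jt HM.
st HM; jf HM.
sts HM (W + 20 * n - 2 + 2 * n + 2 + c)%N.
st HM; st HM.
stl HM (W + 20 * n - 2 + 2 * n + 2 + W + 1 + (c - wn w i))%N.
sts HM (W + 20 * n - 2 + 2 * n + 2 + W + 1 + c)%N.
do 4 st HM.
apply: Hc; first exact_g.
split; first by repeat split; rdw; slia.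
split; first by move=> j hj; split; rdw; [exact: (hin j hj).1 | exact: (hin j hj).2].
split; first by rdw; slia.
split; first by rdw; slia.
split; first by rdw; slia.
move=> c' hc'; cbv beta; case: (eqVneq c' c) => [->|ne].
  have -> : (c <= c - 1)%N = false by lia.
  rewrite dpS_ge // comb_lt //; rdw; simpl fst; simpl snd; split; slia.
have -> : (c' <= c - 1)%N = (c' <= c)%N by lia.
rdw; exact: har c' hc'.
Qed.

Lemma inner_eq i c m Q k : (0 < n)%N -> (i < n)%N -> (c <= W)%N -> (wn w i <= c)%N ->
  (dp w v i c).1 = (dp w v i (c - wn w i)).1 + vn v i ->
  good LL MM%:Z m -> @InvI n W w v i c m ->
  (forall m', good LL MM%:Z m' -> @InvI n W w v i (c - 1) m' -> ER 88 m' Q k) ->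
  ER 88 m Q (22 + k).
Proof.
have HM := @HM0 n W w v.
have := @hWB n W w v; have := @hnB n W w v; have := @hBM n W w v hW => hh1 hh2 hh3.
move=> hn hi hc hcw hcmp Hg [[r3 [r4 [r5 [r6 [r7 [r8 r9]]]]]] [hin [r10 [r11 [r12 har]]]]] Hc.
have wB := @wnB n W w v hW i hi.
have vB := @vnB n W w v hW i hi.
have wP : (0 < wn w i)%N by have := hwpos (Ordinal hi); rewrite -wnE.
have hg := @hGM n W w v hW hn.
have [d1 d2] := @dpB n W w v hW i c (ltnW hi).
have [e1 e2] := @dpB n W w v hW i (c - wn w i)%N (ltnW hi).
have [x1 x2] : rd m (Bb + c) = (dp w v i c).1 /\ rd m (Bc + c) = ((dp w v i c).2)%:Z - 1.
  by have := har c hc; rewrite leqnn => h; exact h.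
have [y1 y2] : rd m (Bb + (c - wn w i)) = (dp w v i (c - wn w i)).1 /\
    rd m (Bc + (c - wn w i)) = ((dp w v i (c - wn w i)).2)%:Z - 1.
  by have := har (c - wn w i)%N ltac:(lia); rewrite leq_subr => h; exact h.
st HM; jt HM.
st HM; st HM.
stl HM (W + 20 * n - 2 + 2 * n + 2 + c)%N.
stl HM (W + 20 * n - 2 + 2 * n + 2 + (c - wn w i))%N.
st HM; st HM.
jt HM.
st HM; jt HM.
st HM; st HM.
stl HM (W + 20 * n - 2 + 2 * n + 2 + W + 1 + (c - wn w i))%N.
stl HM (W + 20 * n - 2 + 2 * n + 2 + W + 1 + c)%N.
do 3 st HM.
sts HM (W + 20 * n - 2 + 2 * n + 2 + W + 1 + c)%N.
do 3 st HM.
apply: Hc; first exact_g.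
split; first by repeat split; rdw; slia.
split; first by move=> j hj; split; rdw; [exact: (hin j hj).1 | exact: (hin j hj).2].
split; first by rdw; slia.
split; first by rdw; slia.
split; first by rdw; slia.
move=> c' hc'; cbv beta; case: (eqVneq c' c) => [->|ne].
  have -> : (c <= c - 1)%N = false by lia.
  rewrite dpS_ge // comb_eq //; rdw; simpl fst; simpl snd; split; slia.
have -> : (c' <= c - 1)%N = (c' <= c)%N by lia.
rdw; exact: har c' hc'.
Qed.

End Run.


Section Run.
Variables (n W : nat) (w : 'I_n -> nat) (v : 'I_n -> int).
Hypothesis hW : (0 < W)%N.
Hypothesis hwpos : forall i, (0 < w i)%N.

Local Notation inp := (ks_input W w v).
Local Notation ws := (word_size inp).
Local Notation Bw := (2 ^ ws)%N.
Local Notation K := (n + 9)%N.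
Local Notation MM := (2 ^ (ws * K))%N.
Local Notation Dd := (W + 20 * n - 2)%N.
Local Notation Bb := (Dd + 2 * n + 2)%N.
Local Notation Bc := (Bb + W + 1)%N.
Local Notation LL := (Bc + W + 1)%N.
Local Notation Rch := (reach ws LL MM%:Z prog).
Local Notation ER := (ERch ws LL MM%:Z prog).

Lemma inner_step i c m Q k : (0 < n)%N -> (i < n)%N -> (c <= W)%N -> (wn w i <= c)%N ->
  good LL MM%:Z m -> @InvI n W w v i c m ->
  (forall m', good LL MM%:Z m' -> @InvI n W w v i (c - 1) m' -> ER 88 m' Q k) ->
  ER 88 m Q (22 + k).
Proof.
move=> hn hi hc hcw Hg HI Hc.
case: (ltrgtP ((dp w v i (c - wn w i)).1 + vn v i) ((dp w v i c).1)) => hcmp.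
- apply: (@er_mono _ _ _ _ _ _ _ (13 + k)%N); last lia.
  exact: (inner_gt hW hwpos hn hi hc hcw hcmp Hg HI Hc).
- apply: (@er_mono _ _ _ _ _ _ _ (20 + k)%N); last lia.
  exact: (inner_lt hW hwpos hn hi hc hcw hcmp Hg HI Hc).
- exact: (inner_eq hW hwpos hn hi hc hcw (esym hcmp) Hg HI Hc).
Qed.

Lemma inner_loop i Q k : (0 < n)%N -> (i < n)%N -> forall c m, (c <= W)%N ->
  good LL MM%:Z m -> @InvI n W w v i c m ->
  (forall m', good LL MM%:Z m' -> @InvO n W w v i.+1 m' -> ER 82 m' Q k) ->
  ER 88 m Q (22 * c + 30 + k).
Proof.
move=> hn hi; have wP : (0 < wn w i)%N by have := hwpos (Ordinal hi); rewrite -wnE.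
elim=> [|c IH] m hc Hg HI Hc.
  apply: (@er_mono _ _ _ _ _ _ _ (8 + k)%N); last lia.
  exact: (inner_exit hW hn hi hc wP Hg HI Hc).
case: (ltnP c.+1 (wn w i)) => hcw.
  apply: (@er_mono _ _ _ _ _ _ _ (8 + k)%N); last lia.
  exact: (inner_exit hW hn hi hc hcw Hg HI Hc).
have -> : (22 * c.+1 + 30 + k = 22 + (22 * c + 30 + k))%N by lia.
apply: (inner_step hn hi hc hcw Hg HI) => m' Hg' HI'.
apply: IH => //; first lia.
by rewrite subn1 in HI'.
Qed.

Lemma outer_loop Q k : (0 < n)%N -> forall d i m, (i + d = n)%N ->
  good LL MM%:Z m -> @InvO n W w v i m ->
  (forall m', good LL MM%:Z m' -> rd m' 0 = ((dp w v n W).2)%:Z -> ER 127 m' Q k) ->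
  ER 82 m Q (d * (22 * W + 36) + 6 + k).
Proof.
move=> hn; elim=> [|d IH] i m hd Hg HI Hc.
  rewrite addn0 in hd; subst i; rewrite mul0n add0n.
  exact: (outer_done hW hn Hg HI Hc).
have hi : (i < n)%N by lia.
have -> : (d.+1 * (22 * W + 36) + 6 + k = 6 + (22 * W + 30 + (d * (22 * W + 36) + 6 + k)))%N by lia.
apply: (outer_step hW hn hi Hg HI) => m1 Hg1 HI1.
apply: (inner_loop hn hi (leqnn W) Hg1 HI1) => m2 Hg2 HI2.
apply: IH; [| exact Hg2 | exact HI2 | exact Hc]; lia.
Qed.

End Run.


Section Run.
Variables (n W : nat) (w : 'I_n -> nat) (v : 'I_n -> int).
Hypothesis hW : (0 < W)%N.
Hypothesis hwpos : forall i, (0 < w i)%N.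

Local Notation inp := (ks_input W w v).
Local Notation ws := (word_size inp).
Local Notation Bw := (2 ^ ws)%N.
Local Notation K := (n + 9)%N.
Local Notation MM := (2 ^ (ws * K))%N.
Local Notation Dd := (W + 20 * n - 2)%N.
Local Notation Bb := (Dd + 2 * n + 2)%N.
Local Notation Bc := (Bb + W + 1)%N.
Local Notation LL := (Bc + W + 1)%N.
Local Notation Rch := (reach ws LL MM%:Z prog).
Local Notation ER := (ERch ws LL MM%:Z prog).

Lemma hKz : forall z, `|z| < MM%:Z -> (zwords ws z <= K)%N.
Proof.
move=> z hz; apply: zwords_le; [exact: word_size_pos | lia | lia].
Qed.

Lemma main_pos : (0 < n)%N -> exists fuel m T S,
  exec prog fuel inp = Some (m, T, S) /\ rd m 0 = ((dp w v n W).2)%:Z /\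
  (T <= 5000 * (n ^ 2 * W + 1))%N /\ (S <= 5000 * (n ^ 2 * W + 1))%N.
Proof.
move=> hn.
have HM := @HM0 n W w v.
have := @hWB n W w v; have := @hnB n W w v; have := @hBM n W w v hW => hh1 hh2 hh3.
have g0 : good LL MM%:Z inp.
  apply/andP; split; first by rewrite (size_inp w v hW); lia.
  by apply/allP => z hz; have := inp_bound hz; lia.
pose Q := fun (pc : nat) (m : memory) => pc = 127%N /\ rd m 0 = ((dp w v n W).2)%:Z.
have E : ER 0 inp Q (59 + (9 * (2 * n - 1) + 3 + (14 + (n * (22 * W + 36) + 6 + 0)))).
  apply: (reloc1 hW hn); last exact g0.
  move=> m1 g1 I1.
  apply: (@reloop n W w v hW Q _ (2 * n - 1) m1); [lia | exact hn | exact g1 | |].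
    by have -> : (2 * n - 1 + 2 = 2 * n + 1)%N by lia.
  move=> m2 g2 I2.
  apply: (reinit hW hn g2 I2) => m3 g3 I3.
  apply: (@outer_loop n W w v hW hwpos Q _ hn n 0 m3); [lia | exact g3 | exact I3 |].
  by move=> m4 g4 e4; apply: er_stop.
case: E => pcf [mf [R [hp e]]]; subst pcf.
have hK := hKz.
have [fuel [t' [s' [hr [ht hs]]]]] :=
  reach_run HM hK 0 (mem_space ws inp) R g0 (halt_none _ mf (isT : (127 < size prog)%N) erefl).
exists fuel, mf, t', s'; split; first exact hr.
split; first exact e.
have sp := space_good hK g0.
split.
  by apply: (leq_trans ht); rewrite add0n; exact: arithT.
have := arithS hn hW; lia.
Qed.

Lemma main_zero : n = 0%N -> exists fuel m T S,
  exec prog fuel inp = Some (m, T, S) /\ rd m 0 = 1 /\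
  (T <= 5000)%N /\ (S <= 5000)%N.
Proof.
move=> hn0.
have HM := @HM0 n W w v.
have := @hWB n W w v; have := @hnB n W w v; have := @hBM n W w v hW => hh1 hh2 hh3.
have g0 : good 2 MM%:Z inp.
  apply/andP; split; first by rewrite (size_inp w v hW); lia.
  by apply/allP => z hz; have := inp_bound hz; lia.
pose Q := fun (pc : nat) (m : memory) => pc = 129%N /\ rd m 0 = 1.
have h1 : rd inp 1 = n%:Z by [].
have E : ERch ws 2 MM%:Z prog 0 inp Q 2.
  jt HM.
  st HM.
  by apply: er_stop; split => //; rdw.
case: E => pcf [mf [R [hp e]]]; subst pcf.
have hK := hKz.
have [fuel [t' [s' [hr [ht hs]]]]] :=
  reach_run HM hK 0 (mem_space ws inp) R g0 (halt_none _ mf (isT : (129 < size prog)%N) erefl).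
exists fuel, mf, t', s'; split; first exact hr.
split; first exact e.
have sp := space_good hK g0.
split; lia.
Qed.

End Run.

Theorem theorem1 :
  exists (P : seq instr) (C : nat),
  forall (n W : nat) (w : 'I_n -> nat) (v : 'I_n -> int),
    (0 < W)%N -> (forall i, 0 < w i)%N ->
    exists (fuel : nat) (m : memory) (T S : nat),
      exec P fuel (ks_input W w v) = Some (m, T, S) /\
      rd m 0 = (#|ks_optimal W w v|)%:Z /\
      (T <= C * (n ^ 2 * W + 1))%N /\
      (S <= C * (n ^ 2 * W + 1))%N.
Proof.
exists prog, 5000%N => n W w v hW hw.
case: n w v hw => [|n] w v hw.
  have [fuel [m [T [S [h1 [h2 [h3 h4]]]]]]] := main_zero w v hW (erefl 0%N).
  exists fuel, m, T, S; split; first exact h1.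
  split; first by rewrite opt_card h2.
  by rewrite mul0n add0n muln1.
have [fuel [m [T [S [h1 [h2 [h3 h4]]]]]]] := @main_pos n.+1 W w v hW hw (ltn0Sn n).
exists fuel, m, T, S; split; first exact h1.
split; first by rewrite opt_card h2.
by split.
Qed.
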